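(* Let $n,m,\ell$ be integers with $n-1\ge m\ge \ell\ge 0$. Then $$\mathcal Y_n\big(2^{\{m-\ell\}},1^{\{\ell\}}\big)+n\sum_{j=0}^{n-m-2}\mathcal Y_n\big(3^{\{m-\ell+1+j\}},2^{\{\ell-1-j\}},1^{\{n-m-2-j\}}\big)=\frac{1}{n(m+1)}\left(\binom{n-1}{m}+(-1)^m\binom{n-1}{2m+1}\right)\binom{n}{\ell}.$$
   Context: Let $\zeta_n=e^{2\pi\sqrt{-1}/n}$. For positive integers $s_1,\dots,s_m$, define $\mathfrak Z_n(s_1,\dots,s_m):=\sum_{1\le i_1<\cdots<i_m\le n-1}\prod_{k=1}^{m}(1-\zeta_n^{i_k})^{-s_k}$ (equal to $1$ if $m=0$ and to $0$ if $m>n-1$). Define $\mathcal Y_n(s_1,\dots,s_m):=\sum_{\sigma}\mathfrak Z_n(\sigma)$, where $\sigma$ runs over all distinct rearrangements of $(s_1,\dots,s_m)$; $\mathcal Y_n$ of the empty sequence is $1$. Notation: $a^{\{k\}}$ denotes the block $a,\dots,a$ of length $k$; any $\mathcal Y_n$ term in which some block has negative length is interpreted as $0$. Binomial coefficients $\binom{a}{b}$ are $0$ when $b<0$ or $b>a\ge0$. *)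

(* Defs.v *)
From HB Require Import structures.
From mathcomp Require Import all_boot all_order all_algebra.
From mathcomp Require Import complex.
From mathcomp Require Import all_classical all_reals all_analysis.
Set Implicit Arguments. Unset Strict Implicit. Unset Printing Implicit Defensive.
Import Order.TTheory GRing.Theory Num.Theory.
Local Open Scope ring_scope.

Section Defs.
Variable R : realType.

Definition zeta (n : nat) : R[i] :=
  (cos (2 * pi / n%:R) +i* sin (2 * pi / n%:R))%C.

(* Zaux n s lo = sum over lo <= i_1 < ... < i_m <= n-1 of
   prod_k (1 - zeta^{i_k})^{-s_k} *)
Fixpoint Zaux (n : nat) (s : seq nat) (lo : nat) : R[i] :=
  match s with
  | [::] => 1
  | a :: t => \sum_(lo <= i < n) (1 - zeta n ^+ i) ^- a * Zaux n t i.+1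
  end.

Definition frakZ (n : nat) (s : seq nat) : R[i] := Zaux n s 1.

(* \mathcal Y_n(s): sum over all distinct rearrangements of s *)
Definition calY (n : nat) (s : seq nat) : R[i] :=
  \sum_(t <- permutations s) frakZ n t.

(* \mathcal Y_n of a concatenation of blocks a^{k} given as pairs (a, k)
   with integer lengths k; 0 if some block has negative length. *)
Definition calYb (n : nat) (bl : seq (nat * int)) : R[i] :=
  if all (fun p => 0 <= p.2) bl
  then calY n (flatten [seq nseq `|p.2|%N p.1 | p <- bl])
  else 0.
End Defs.

(* Main.v *)
Require Import Defs.
From HB Require Import structures.
From mathcomp Require Import all_boot all_order all_algebra.
From mathcomp Require Import complex.
From mathcomp Require Import all_classical all_reals all_analysis.
From mathcomp Require Import zify ring lra.
Import Order.TTheory GRing.Theory Num.Theory.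
Local Open Scope ring_scope.

Set Implicit Arguments. Unset Strict Implicit. Unset Printing Implicit Defensive.


Section Gen.
Variable C : fieldType.
Variable x : nat -> C.
Variable n : nat.

Fixpoint Zg (s : seq nat) (lo : nat) : C :=
  match s with
  | [::] => 1
  | a :: t => \sum_(lo <= i < n) x i ^+ a * Zg t i.+1
  end.

Definition Yg lo s := \sum_(t <- permutations s) Zg t lo.

Lemma Yg_perm lo s s' : perm_eq s s' -> Yg lo s = Yg lo s'.
Proof. by move=> /perm_permutations h; rewrite /Yg (perm_big _ h). Qed.

Lemma Yg_nil lo : Yg lo [::] = 1.
Proof. by rewrite /Yg /permutations /= big_seq1. Qed.

Lemma Zg_big t lo : (n - lo < size t)%N -> Zg t lo = 0.
Proof.
elim: t lo => [|a t IH] lo //= h.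
rewrite big_nat big1 // => i /andP[hi1 hi2]; rewrite IH ?mulr0 //; lia.
Qed.

Lemma Yg_big lo s : (n - lo < size s)%N -> Yg lo s = 0.
Proof.
move=> h; rewrite /Yg big_seq big1 // => t; rewrite mem_permutations => /perm_size e.
by rewrite Zg_big // e.
Qed.

Lemma Yg_split lo s : (0 < size s)%N ->
  Yg lo s = \sum_(a <- undup s) \sum_(t <- permutations (rem a s)) Zg (a :: t) lo.
Proof.
move=> h; rewrite /Yg (perm_big _ (permutationsE h)).
by rewrite big_allpairs_dep.
Qed.

Lemma Yg_rec lo s : (lo < n)%N -> (0 < size s)%N ->
  Yg lo s = Yg lo.+1 s + \sum_(a <- undup s) x lo ^+ a * Yg lo.+1 (rem a s).
Proof.
move=> hlo hs; rewrite !Yg_split // -big_split /=; apply: eq_bigr => a _.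
rewrite /Yg big_distrr -big_split /=; apply: eq_bigr => t _ /=.
by rewrite big_ltn // addrC.
Qed.

End Gen.


Lemma rem_nseq_neq (a b k : nat) (t : seq nat) : a != b ->
  rem a (nseq k b ++ t) = nseq k b ++ rem a t.
Proof. by move=> h; elim: k => //= k ->; rewrite eq_sym (negbTE h). Qed.

Definition blk (q p r : nat) := nseq r 3%N ++ nseq p 2%N ++ nseq q 1%N.

Section Gen2.
Variable C : fieldType.
Variable x : nat -> C.
Variable n : nat.

Definition Mn lo q p r := Yg x n lo (blk q p r).

Lemma sum_undup (F : nat -> C) q p r :
  \sum_(a <- undup (blk q p r)) F a =
  (if q is _.+1 then F 1%N else 0) + (if p is _.+1 then F 2%N else 0) +
  (if r is _.+1 then F 3%N else 0).
Proof.
have e : perm_eq (undup (blk q p r)) [seq a <- [:: 1%N; 2%N; 3%N] | a \in blk q p r].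
  apply: uniq_perm; rewrite ?undup_uniq ?filter_uniq // => a.
  rewrite mem_undup mem_filter andb_idr // /blk !mem_cat !mem_nseq !inE.
  by case/orP=> [/andP[_ ->]|/orP[]/andP[_ ->]]; rewrite ?orbT.
rewrite (perm_big _ e) big_filter big_mkcond !big_cons big_nil /= addr0 /blk; clear e.
rewrite !mem_cat !mem_nseq /=.
by case: q p r => [|q] [|p] [|r] //=; rewrite ?addr0 ?add0r ?addrA.
Qed.

Lemma remb1 q p r : rem 1%N (blk q.+1 p r) = blk q p r.
Proof. by rewrite /blk rem_nseq_neq // rem_nseq_neq //= ?eqxx. Qed.
Lemma remb2 q p r : rem 2%N (blk q p.+1 r) = blk q p r.
Proof. by rewrite /blk rem_nseq_neq //= ?eqxx. Qed.
Lemma remb3 q p r : rem 3%N (blk q p r.+1) = blk q p r.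
Proof. by rewrite /blk /= ?eqxx. Qed.

Lemma Mn_rec lo q p r : (lo < n)%N -> (0 < q + p + r)%N ->
  Mn lo q p r = Mn lo.+1 q p r
   + (if q is q'.+1 then x lo * Mn lo.+1 q' p r else 0)
   + (if p is p'.+1 then x lo ^+ 2 * Mn lo.+1 q p' r else 0)
   + (if r is r'.+1 then x lo ^+ 3 * Mn lo.+1 q p r' else 0).
Proof.
move=> hlo hs; rewrite /Mn Yg_rec //; last first.
  by rewrite /blk !size_cat !size_nseq; lia.
rewrite sum_undup -!addrA; congr (_ + _).
clear hs; case: q => [|q]; case: p => [|p]; case: r => [|r];
 by rewrite ?remb1 ?remb2 ?remb3 ?expr1 ?add0r ?addr0.
Qed.

Lemma Mn0 lo : Mn lo 0 0 0 = 1.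
Proof. exact: Yg_nil. Qed.

Lemma Mn_big lo q p r : (n - lo < q + p + r)%N -> Mn lo q p r = 0.
Proof. by move=> h; apply: Yg_big; rewrite /blk !size_cat !size_nseq; lia. Qed.

End Gen2.


Section Gen3.
Variable C : fieldType.
Variable x : nat -> C.
Variable n : nat.

Definition Mz lo (q p r : int) : C :=
  if (0 <= q) && (0 <= p) && (0 <= r) then Mn x n lo `|q|%N `|p|%N `|r|%N else 0.

Lemma MzE lo (a b c : nat) : Mz lo a b c = Mn x n lo a b c.
Proof. by rewrite /Mz !le0z_nat. Qed.

Lemma Mz_neg lo q p r : (q < 0) || (p < 0) || (r < 0) -> Mz lo q p r = 0.
Proof. by rewrite /Mz; case: ifP => // /andP[/andP[]]; lia. Qed.

Lemma Sz1 (a : nat) : a.+1%:Z - 1 = a%:Z.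
Proof. lia. Qed.

Lemma Mz_rec lo q p r : (lo < n)%N ->
  Mz lo q p r = Mz lo.+1 q p r + x lo * Mz lo.+1 (q - 1) p r
    + x lo ^+ 2 * Mz lo.+1 q (p - 1) r + x lo ^+ 3 * Mz lo.+1 q p (r - 1).
Proof.
move=> hlo.
case: (boolP ((0 <= q) && (0 <= p) && (0 <= r))) => [/andP[/andP[hq hp hr]] | h]; last first.
  rewrite !Mz_neg ?mulr0 ?addr0 //; move: h; lia.
have [a ->] : exists a : nat, q = a by exists `|q|%N; lia.
have [b ->] : exists a : nat, p = a by exists `|p|%N; lia.
have [c ->] : exists a : nat, r = a by exists `|r|%N; lia.
have [/eqP e|hs] := boolP (a + b + c == 0)%N.
  have [-> -> ->] : [/\ a = 0%N, b = 0%N & c = 0%N] by split; lia.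
  rewrite !sub0r (MzE lo 0 0 0) (MzE lo.+1 0 0 0) !Mn0.
  by rewrite !Mz_neg ?mulr0 ?addr0 //; lia.
rewrite !MzE (Mn_rec _ hlo); last by lia.
case: a {hs} => [|a]; case: b => [|b]; case: c => [|c];
  rewrite ?sub0r ?Sz1 ?MzE ?Mz_neg ?mulr0 ?addr0 //.
Qed.

Lemma Mz_big lo q p r : (n - lo)%:Z < q + p + r -> Mz lo q p r = 0.
Proof.
move=> h; case: (boolP ((0 <= q) && (0 <= p) && (0 <= r))) => [/andP[/andP[hq hp hr]] | h']; last first.
  by rewrite !Mz_neg //; move: h'; lia.
rewrite /Mz hq hp hr /= Mn_big //; lia.
Qed.

Lemma Mz_n q p r : Mz n q p r = ((q == 0) && (p == 0) && (r == 0))%:R.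
Proof.
case: (boolP ((0 <= q) && (0 <= p) && (0 <= r))) => [/andP[/andP[hq hp hr]] | h']; last first.
  rewrite Mz_neg; last by move: h'; lia.
  suff -> : (q == 0) && (p == 0) && (r == 0) = false by [].
  by apply/negbTE; move: h'; lia.
have [/eqP e|hs] := boolP (q + p + r == 0).
  have [-> -> ->] : [/\ q = 0, p = 0 & r = 0] by split; lia.
  by rewrite (MzE _ 0 0 0) Mn0.
rewrite Mz_big ?subnn //; last by lia.
suff -> : (q == 0) && (p == 0) && (r == 0) = false by [].
by apply/negbTE; move: hs; lia.
Qed.

Definition Ep (f : nat -> C) lo : {poly C} := \prod_(lo <= i < n) (1 + f i *: 'X).
Definition Ecz f lo (k : int) : C := if 0 <= k then (Ep f lo)`_`|k|%N else 0.

Lemma Ecz_rec f lo k : (lo < n)%N ->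
  Ecz f lo k = Ecz f lo.+1 k + f lo * Ecz f lo.+1 (k - 1).
Proof.
move=> hlo; rewrite /Ecz /Ep big_ltn // -/(Ep f lo.+1).
rewrite mulrDl mul1r -scalerAl coefD coefZ coefXM.
case: k => [a|a]; last first.
  have h1 : (0 <= Negz a) = false by rewrite NegzE; lia.
  have h2 : (0 <= Negz a - 1) = false by rewrite NegzE; lia.
  by rewrite h1 h2 mulr0 addr0.
case: a => [|a]; first by rewrite /= mulr0 addr0.
rewrite Sz1; have h1 : (0 <= (a.+1)%:Z) = true by lia.
have h2 : (0 <= a%:Z) = true by lia.
by rewrite h1 h2.
Qed.

Lemma Ecz_n f k : Ecz f n k = (k == 0)%:R.
Proof.
rewrite /Ecz /Ep big_geq // coef1.
case: k => [a|a] //=; case: a => //.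
Qed.

Lemma Ecz_neg f lo k : k < 0 -> Ecz f lo k = 0.
Proof. by rewrite /Ecz; case: ifP => //; lia. Qed.

Lemma conv d : forall lo (k m : int) (K : nat), (lo + d = n)%N -> k < K%:Z ->
  \sum_(r < K) Mz lo (k - r%:Z) (m - r%:Z) r%:Z
   = Ecz x lo k * Ecz (fun i => x i ^+ 2) lo m.
Proof.
elim: d => [|d IH] lo k m K hd hk.
  rewrite addn0 in hd; subst lo.
  have [hk0|hk0] := ltP k 0.
    rewrite Ecz_neg // mul0r big1 // => i _; rewrite Mz_neg //; lia.
  case: K hk => [|K] hk; first by lia.
  rewrite big_ord_recl big1 ?addr0; last first.
    by move=> i _; rewrite Mz_n /bump /=; case: eqP => //=; rewrite andbF.
  rewrite Mz_n !Ecz_n /= eqxx andbT.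
  by case: (k == 0); case: (m == 0); rewrite /= ?mulr1 ?mulr0.
have hlo : (lo < n)%N by lia.
have [hk0|hk0] := ltP k 0.
  rewrite (Ecz_neg _ _ hk0) mul0r big1 // => i _; rewrite Mz_neg //; lia.
rewrite (Ecz_rec _ _ hlo) (Ecz_rec _ m hlo).
under eq_bigr do rewrite (Mz_rec _ _ _ hlo).
rewrite !big_split /= -!big_distrr /=.
have e1 : forall i : nat, k - i%:Z - 1 = (k - 1) - i%:Z by move=> i; lia.
have e2 : forall i : nat, m - i%:Z - 1 = (m - 1) - i%:Z by move=> i; lia.
have -> : \sum_(i < K) Mz lo.+1 (k - i%:Z - 1) (m - i%:Z) i%:Z
   = \sum_(i < K) Mz lo.+1 ((k - 1) - i%:Z) (m - i%:Z) i%:Z.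
  by apply: eq_bigr => i _; rewrite e1.
have -> : \sum_(i < K) Mz lo.+1 (k - i%:Z) (m - i%:Z - 1) i%:Z
   = \sum_(i < K) Mz lo.+1 (k - i%:Z) ((m - 1) - i%:Z) i%:Z.
  by apply: eq_bigr => i _; rewrite e2.
rewrite !IH //; try lia.
case: K hk => [|K] hk; first by lia.
rewrite big_ord_recl /= sub0r (@Mz_neg _ _ _ (-1)); last by lia.
have e3 : forall i : 'I_K, k - (bump 0 i)%:Z = (k - 1) - i%:Z by move=> i; rewrite /bump /=; lia.
have e4 : forall i : 'I_K, m - (bump 0 i)%:Z = (m - 1) - i%:Z by move=> i; rewrite /bump /=; lia.
have e5 : forall i : 'I_K, (bump 0 i)%:Z - 1 = i%:Z by move=> i; rewrite /bump /=; lia.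
under eq_bigr do rewrite e3 e4 e5.
rewrite IH; [ring | lia | lia].

Qed.

Lemma full d : forall lo (q p r : int), (lo + d = n)%N -> q + p + r = d%:Z ->
  Mz lo q p r = (\prod_(lo <= i < n) x i) * Mz lo p r 0.
Proof.
elim: d => [|d IH] lo q p r hd hs.
  rewrite addn0 in hd; subst lo; rewrite big_geq // mul1r !Mz_n eqxx andbT.
  case: (boolP (p == 0)) => hp; case: (boolP (r == 0)) => hr; rewrite /= ?andbF //.
  have hq : q == 0 by move: hp hr hs; lia.
  by rewrite hq.
have hlo : (lo < n)%N by lia.
rewrite (Mz_rec _ _ _ hlo) (Mz_rec p r 0 hlo) big_ltn //.
rewrite (Mz_big (lo:=lo.+1)); last by lia.
rewrite (@Mz_neg _ _ _ (0-1)); last by lia.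
rewrite (IH lo.+1 (q-1) p r) ?(IH lo.+1 q (p-1) r) ?(IH lo.+1 q p (r-1)); try lia.
ring.
Qed.

End Gen3.


Section Poly.
Variable C : numFieldType.

Lemma coef_lin_exp (c : C) k j : ((c *: 'X + 1) ^+ k)`_j = c ^+ j * 'C(k, j)%:R.
Proof.
elim: k j => [|k IH] j.
  by rewrite expr0 coef1; case: j => [|j] //=; rewrite ?mulr1 // mulr0.
rewrite exprSr mulrDr mulr1 -scalerAr coefD coefZ coefMX.
case: j => [|j] /=; first by rewrite IH !bin0 mulr0 add0r.
by rewrite !IH binS natrD exprS; ring.
Qed.

Lemma coef_comp_scaleX (c : C) p i : (p \Po (c *: 'X))`_i = c ^+ i * p`_i.
Proof.
rewrite comp_polyE; under eq_bigr do rewrite exprZn scalerA.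
rewrite coef_sumMXn /= (big_ord1_eq _ (fun j => p`_j * c ^+ j)).
case: ltnP => h; first by rewrite mulrC.
by rewrite nth_default // mulr0.
Qed.

Lemma comp_prod (I : Type) (r : seq I) (F : I -> {poly C}) q :
  (\prod_(i <- r) F i) \Po q = \prod_(i <- r) (F i \Po q).
Proof.
apply: (big_morph (fun p => p \Po q)) => [a b|]; first exact: comp_polyM.
by rewrite -polyC1 comp_polyC.
Qed.

Variable n : nat.
Variable z : C.
Hypothesis prim_z : n.-primitive_root z.

Let n_gt0 : (0 < n)%N := prim_order_gt0 prim_z.

Lemma unit_i i : (0 < i < n)%N -> 1 - z ^+ i != 0.
Proof.
move=> /andP[h1 h2]; rewrite subr_eq0 eq_sym -(prim_order_dvd prim_z).
by rewrite gtnNdvd.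
Qed.

Definition Gp : {poly C} := \prod_(1 <= i < n) (('X + 1) - (z ^+ i)%:P).

Lemma XG : 'X * Gp = ('X + 1) ^+ n - 1.
Proof.
have h := congr1 (fun p => p \Po ('X + 1)) (factor_Xn_sub_1 prim_z).
rewrite /= comp_polyB comp_Xn_poly -polyC1 comp_polyC polyC1 in h.
rewrite -h comp_prod big_ltn //  comp_polyB comp_polyX comp_polyC expr0 polyC1 addrK.
congr (_ * _); apply: eq_bigr => i _.
by rewrite comp_polyB comp_polyX comp_polyC.
Qed.

Lemma prod_1z : \prod_(1 <= i < n) (1 - z ^+ i) = n%:R.
Proof.
have := congr1 (fun p : {poly C} => p`_1) XG.
rewrite /= coefXM /= -horner_coef0 /Gp horner_prod coefB coef1 subr0.
have e : ('X + 1 : {poly C}) = 1 *: 'X + 1 by rewrite scale1r.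
rewrite [in X in _ = X -> _]e coef_lin_exp bin1 expr1n mul1r => <-.
by apply: eq_bigr => i _; rewrite !hornerE.
Qed.

Definition xr i : C := (1 - z ^+ i)^-1.

Lemma P_id : (n%:R *: Ep n xr 1) * 'X = ('X + 1) ^+ n - 1.
Proof.
rewrite -XG mulrC; congr ('X * _).
have -> : Ep n xr 1 = (\prod_(1 <= i < n) xr i) *: Gp.
  rewrite /Ep /Gp -scaler_prod big_nat [in RHS]big_nat; apply: eq_bigr => i hi.
  have hu := unit_i hi.
  rewrite -!mul_polyC -addrA -polyC1 -polyCB mulrDr addrC; congr (_ + _).
  by rewrite -polyCM /xr mulVf.
rewrite scalerA /xr prodfV prod_1z mulfV ?scale1r //.
by rewrite pnatr_eq0 -lt0n.
Qed.


Lemma n_neq0 : n%:R != 0 :> C.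
Proof. by rewrite pnatr_eq0 -lt0n. Qed.

Lemma P_coef k : (Ep n xr 1)`_k = 'C(n, k.+1)%:R / n%:R.
Proof.
have := congr1 (fun p : {poly C} => p`_k.+1) P_id.
rewrite /= coefMX /= coefZ coefB coef1 subr0.
have e : ('X + 1 : {poly C}) = 1 *: 'X + 1 by rewrite scale1r.
rewrite e coef_lin_exp expr1n mul1r => <-.
by rewrite mulrC mulrA mulVf ?mul1r // n_neq0.
Qed.

Lemma comp_polyXk (p q : {poly C}) k : (p ^+ k) \Po q = (p \Po q) ^+ k.
Proof.
elim: k => [|k IH]; first by rewrite !expr0 -polyC1 comp_polyC.
by rewrite !exprS comp_polyM IH.
Qed.

Lemma Q_comp : Ep n (fun i => xr i ^+ 2) 1 \Po (- 'X ^+ 2)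
   = Ep n xr 1 * (Ep n xr 1 \Po ((-1) *: 'X)).
Proof.
rewrite /Ep !comp_prod -big_split /=; apply: eq_bigr => i _.
rewrite !comp_polyD -!polyC1 !comp_polyC !comp_polyZ !comp_polyX.
rewrite -!mul_polyC polyC_exp polyCN polyC1.
ring.
Qed.

Lemma Q_coef m : (Ep n (fun i => xr i ^+ 2) 1)`_m
   = ('C(n, m.+1)%:R + 2 * (-1) ^+ m * 'C(n, m.*2.+2)%:R) / (n%:R ^+ 2).
Proof.
set P := Ep n xr 1; set Q := Ep n (fun i => xr i ^+ 2) 1.
have hA : (('X + 1) ^+ n - 1) * ((('X + 1) ^+ n - 1) \Po ((-1) *: 'X))
      = (- (n%:R ^+ 2)) *: ((Q \Po (- 'X ^+ 2)) * 'X ^+ 2).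
  rewrite -P_id Q_comp comp_polyM comp_polyZ comp_polyX -/P.
  rewrite -!mul_polyC polyCN polyC1 (polyCN (n%:R ^+ 2)) polyC_exp; ring.
have hB : (('X + 1) ^+ n - 1) \Po ((-1) *: 'X) = ((-1) *: 'X + 1) ^+ n - 1 :> {poly C}.
  by rewrite comp_polyB comp_polyXk comp_polyD comp_polyX -polyC1 comp_polyC.
have hC : ('X + 1) ^+ n * ((-1) *: 'X + 1) ^+ n
      = (((-1) *: 'X + 1) ^+ n) \Po 'X ^+ 2 :> {poly C}.
  rewrite comp_polyXk comp_polyD comp_polyZ comp_polyX -polyC1 comp_polyC -exprMn.
  congr (_ ^+ _); rewrite -!mul_polyC polyCN polyC1; ring.
have hD : - 'X ^+ 2 = ((-1) *: 'X) \Po 'X ^+ 2 :> {poly C}.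
  by rewrite comp_polyZ comp_polyX scaleN1r.
have := congr1 (fun p : {poly C} => p`_(m.*2.+2)) hA.
rewrite /= hB coefZ coefMXn.
have -> : (m.*2.+2 < 2)%N = false by lia.
have -> : (m.*2.+2 - 2)%N = m.*2 by lia.
rewrite hD comp_polyA coef_comp_poly_Xn // dvdn2 odd_double /= divn2 half_double.
rewrite coef_comp_scaleX mulrBl !mulrBr mul1r hC !coefB.
have h11 : (1 * 1 : {poly C})`_(m.*2.+2) = 0 by rewrite mulr1 coef1.
rewrite h11 subr0.
rewrite coef_comp_poly_Xn // dvdn2 /= negbK odd_double /= divn2 /= half_double.
have e : ('X + 1 : {poly C}) = 1 *: 'X + 1 by rewrite scale1r.
rewrite e !coef_lin_exp.
have h12 : ((1 *: 'X + 1) ^+ n * 1 : {poly C})`_(m.*2.+2) = 'C(n, m.*2.+2)%:R.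
  by rewrite mulr1 coef_lin_exp expr1n mul1r.
rewrite h12.
have hs2 : (-1) ^+ m.*2.+2 = 1 :> C.
  by rewrite -[m.*2.+2]/((m.+1).*2) -mul2n exprM sqrrN expr1n expr1n.
have ss : (-1) ^+ m * (-1) ^+ m = 1 :> C.
  by rewrite -expr2 -exprM mulnC exprM sqrrN expr1n expr1n.
rewrite hs2 exprS mul1r.
set s := (-1) ^+ m; set C1 : C := 'C(n, m.+1)%:R; set C2 : C := 'C(n, m.*2.+2)%:R.
set N : C := n%:R; set q := Q`_m => h.
have N2 : N ^+ 2 != 0 by rewrite expf_neq0 // n_neq0.
have key : N ^+ 2 * q = C1 + 2 * s * C2.
  apply/eqP; rewrite -subr_eq0.
  have -> : N ^+ 2 * q - (C1 + 2 * s * C2)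
     = s * ((-1 * s * C1 - C2 - C2) - - N ^+ 2 * (s * q)) + (s * s - 1) * (C1 - N ^+ 2 * q).
    by ring.
  by rewrite h subrr ss subrr mulr0 mul0r addr0.
by rewrite -key [N ^+ 2 * _]mulrC mulfK.
Show.
Qed.

End Poly.


Section Z.
Variable R : realType.

Lemma zeta_pow (n k : nat) : zeta R n ^+ k =
   (cos ((2 * pi / n%:R) *+ k) +i* sin ((2 * pi / n%:R) *+ k))%C.
Proof.
elim: k => [|k IH]; first by rewrite !mulr0n cos0 sin0.
rewrite exprSr IH /zeta; apply/eqP; rewrite eq_complex /=.
rewrite !(mulrSr (2 * pi / n%:R) k) cosD sinD eqxx /=.
by rewrite addrC.
Qed.

Lemma cos_lt1 (t : R) : 0 < t -> t < pi *+ 2 -> cos t < 1.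
Proof.
move=> h0 h2; have [h|h] := leP t pi.
  rewrite -cos0 ltr_cos // ?in_itv /= ?lexx ?pi_ge0 ?(ltW h0) //.
rewrite -cosN -(cosD2pi (- t)) -cos0 ltr_cos ?in_itv /= ?lexx ?pi_ge0 //.
- rewrite mulr2n; lra.
- rewrite mulr2n; apply/andP; split; lra.
Qed.

Lemma zeta_prim (n : nat) : (0 < n)%N -> n.-primitive_root (zeta R n).
Proof.
move=> hn; apply/andP; split => //; apply/forallP => i; apply/eqP.
rewrite unity_rootE zeta_pow.
have hn' : n%:R != 0 :> R by rewrite pnatr_eq0 -lt0n.
have [e|ne] := eqVneq i.+1 n.
  rewrite e -mulr_natr divfK //.
  have -> : 2 * pi = pi *+ 2 :> R by rewrite mulr2n; lra.
  by rewrite cos2pi sin2pi; apply/eqP.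
have hlt : (i.+1 < n)%N by move: (ltn_ord i) ne; lia.
apply/negbTE; rewrite eq_complex /= negb_and; apply/orP; left.
rewrite lt_eqF // cos_lt1 //.
- rewrite -mulr_natr; apply: mulr_gt0 => //; apply: divr_gt0; last by rewrite ltr0n.
  by rewrite mulr_gt0 // pi_gt0.
- have ha : (i.+1)%:R / n%:R < 1 :> R.
    by rewrite ltr_pdivrMr ?ltr0n // mul1r ltr_nat.
  have hb : 0 < (i.+1)%:R / n%:R :> R by rewrite divr_gt0 ?ltr0n.
  have -> : 2 * pi / n%:R *+ i.+1 = (pi *+ 2) * ((i.+1)%:R / n%:R) :> R.
    by rewrite -mulr_natr mulr2n; field.
  have := pi_gt0 R; rewrite mulr2n; nra.
Qed.

End Z.



Section F.
Variable R : realType.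
Variable n : nat.

Lemma Zaux_Zg s lo : Zaux R n s lo = Zg (xr (zeta R n)) n s lo.
Proof.
elim: s lo => [|a s IH] lo //=; apply: eq_bigr => i _.
by rewrite IH /xr exprVn.
Qed.

Lemma calY_Yg s : calY R n s = Yg (xr (zeta R n)) n 1 s.
Proof. by apply: eq_bigr => t _; rewrite /frakZ Zaux_Zg. Qed.

Lemma calYb3 (r p q : int) :
  calYb R n [:: (3%N, r); (2%N, p); (1%N, q)] = Mz (xr (zeta R n)) n 1 q p r.
Proof.
rewrite /calYb /Mz /=.
case: (boolP (0 <= r)) => hr; case: (boolP (0 <= p)) => hp; case: (boolP (0 <= q)) => hq;
  rewrite /= ?andbF //.
by rewrite calY_Yg /Mn /blk cats0.
Qed.

Lemma calYb2 (p q : int) :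
  calYb R n [:: (2%N, p); (1%N, q)] = Mz (xr (zeta R n)) n 1 q p 0.
Proof.
rewrite /calYb /Mz /=.
case: (boolP (0 <= p)) => hp; case: (boolP (0 <= q)) => hq;
  rewrite /= ?andbF //.
by rewrite calY_Yg /Mn /blk cats0.
Qed.

End F.


Unset Implicit Arguments. Set Strict Implicit.

Theorem theorem3 (R : realType) (n m l : nat) (hlm : (l <= m)%N) (hmn : (m <= n - 1)%N) (hn : (1 <= n)%N) :
  calYb R n [:: (2%N, (m%:Z - l%:Z)); (1%N, l%:Z)]
  + n%:R * \sum_(0 <= j < n - m - 1)
      calYb R n [:: (3%N, (m%:Z - l%:Z + 1 + j%:Z)); (2%N, (l%:Z - 1 - j%:Z));
                  (1%N, (n%:Z - m%:Z - 2 - j%:Z))]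
  = (n * (m + 1))%:R^-1
    * ('C(n - 1, m)%:R + (-1) ^+ m * 'C(n - 1, 2 * m + 1)%:R)
    * 'C(n, l)%:R.
Proof.
have pz := zeta_prim R hn.
set z := zeta R n; set x := xr z.
rewrite calYb2; under eq_bigr do rewrite calYb3.
have Nz : n%:R != 0 :> R[i] by rewrite pnatr_eq0 -lt0n.
have hconv := @conv _ x n (n - 1)%N 1 (n%:Z - 1 - l%:Z) m (n - l)%N (ltac:(lia)) (ltac:(lia)).
rewrite -(big_mkord xpredT (fun r => Mz x n 1 (n%:Z - 1 - l%:Z - r%:Z) (m%:Z - r%:Z) r%:Z)) in hconv.
rewrite (@big_cat_nat _ _ _ (m - l)%N) /= in hconv; try lia.
rewrite big_nat big1 ?add0r in hconv; last first.
  move=> i hi; apply: Mz_big; lia.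
rewrite big_ltn in hconv; last lia.
rewrite -[((m - l).+1)%N]add0n big_addn in hconv.
have Px : \prod_(1 <= i < n) x i = n%:R^-1.
  by rewrite /x /xr prodfV prod_1z.
rewrite (@full _ x n (n - 1)%N 1) in hconv; [| lia | lia].
rewrite Px in hconv.
have e1 : m%:Z - (m - l)%N%:Z = l%:Z by lia.
have e2 : (m - l)%N%:Z = m%:Z - l%:Z by lia.
rewrite e1 e2 in hconv.
have e3 : (n - l - (m - l).+1)%N = (n - m - 1)%N by lia.
rewrite e3 in hconv.
have T1 : \sum_(0 <= i < n - m - 1) Mz x n 1 (n%:Z - 1 - l%:Z - (i + (m - l).+1)%N%:Z)
             (m%:Z - (i + (m - l).+1)%N%:Z) (i + (m - l).+1)%N%:Z
   = \sum_(0 <= j < n - m - 1) Mz x n 1 (n%:Z - m%:Z - 2 - j%:Z) (l%:Z - 1 - j%:Z)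
             (m%:Z - l%:Z + 1 + j%:Z).
  apply: eq_bigr => j _; congr (Mz _ _ _ _ _ _); lia.
rewrite T1 in hconv.
have E1 : Ecz n x 1 (n%:Z - 1 - l%:Z) = 'C(n, l)%:R / n%:R.
  rewrite /Ecz (_ : (0 <= n%:Z - 1 - l%:Z) = true); last by lia.
  rewrite (_ : absz (n%:Z - 1 - l%:Z)%R = (n - 1 - l)%N); last by lia.
  rewrite (P_coef pz) (_ : (n - 1 - l).+1 = n - l)%N; last by lia.
  by rewrite bin_sub //; lia.
have E2 : Ecz n (fun i => x i ^+ 2) 1 m
   = ('C(n, m.+1)%:R + 2 * (-1) ^+ m * 'C(n, m.*2.+2)%:R) / (n%:R ^+ 2).
  by rewrite /Ecz (_ : (0 <= m%:Z) = true) ?absz_nat ?(Q_coef pz) //; lia.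
rewrite E1 E2 in hconv.
rewrite -/z -/x.
set A := Mz x n 1 l _ 0 in hconv *.
set S := \sum_(0 <= j < n - m - 1) _ in hconv *.
have hS : S = 'C(n, l)%:R / n%:R *
    (('C(n, m.+1)%:R + 2 * (-1) ^+ m * 'C(n, m.*2.+2)%:R) / n%:R ^+ 2) - n%:R^-1 * A.
  by rewrite -hconv addrC addrK.
rewrite hS.
have hb1 : n%:R * 'C(n - 1, m)%:R = (m.+1)%:R * 'C(n, m.+1)%:R :> R[i].
  by rewrite -!natrM subn1 mul_bin_diag.
have hb2 : n%:R * 'C(n - 1, 2 * m + 1)%:R = 2 * (m.+1)%:R * 'C(n, m.*2.+2)%:R :> R[i].
  rewrite -!natrM subn1 mul_bin_diag (_ : (2 * m + 1).+1 = m.*2.+2)%N; last by lia.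
  by congr (_%:R); rewrite -mul2n; lia.
have M1 : (m.+1)%:R != 0 :> R[i] by rewrite pnatr_eq0.
have eb1 : 'C(n - 1, m)%:R = (m.+1)%:R * 'C(n, m.+1)%:R / n%:R :> R[i].
  by rewrite -hb1 mulrC mulKf.
have eb2 : 'C(n - 1, 2 * m + 1)%:R = 2 * (m.+1)%:R * 'C(n, m.*2.+2)%:R / n%:R :> R[i].
  by rewrite -hb2 mulrC mulKf.
rewrite eb1 eb2 natrM addn1.
field.
by rewrite Nz /= addrC natr1.
Qed.
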